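(* Let $X$ be a set, $F:\mathcal{P}(X)\to\mathcal{P}(X)$ an interior operator, and $\kappa$ a cardinal. Suppose that $(\mathbf{Fix}(F),\subseteq,\bigcup)$ has no basis indexed by a set of cardinality $\kappa$. Then there is no set $Y$ of cardinality less than $\kappa$ together with a relation $r\subseteq X\times Y$ such that $F=\langle r\rangle\circ[r^{\sim}]$.
   Context: An interior operator on $\mathcal{P}(X)$ is a map $F$ that is monotonic, contractive ($F(U)\subseteq U$), and satisfies $F(U)\subseteq F(F(U))$; $\mathbf{Fix}(F)=\{U\subseteq X\mid F(U)=U\}$, a complete sup-lattice under inclusion and unions. A basis of a complete sup-lattice $(L,\leq,\bigvee)$ is a family $(x_i)_{i\in I}$ of elements of $L$ (repetitions allowed) such that for every $y\in L$, $y=\bigvee\{x_i\mid x_i\leq y\}$; it is indexed by $I$. For $r\subseteq X\times Y$, $r^{\sim}=\{(y,x)\mid (x,y)\in r\}$. For $t\subseteq A\times B$, $\langle t\rangle,[t]:\mathcal{P}(B)\to\mathcal{P}(A)$ are $\langle t\rangle(V)=\{a\mid \exists b,\ (a,b)\in t\wedge b\in V\}$ and $[t](V)=\{a\mid \forall b,\ (a,b)\in t\Rightarrow b\in V\}$. *)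

(* Defs.v *)
Set Implicit Arguments.

Definition subset {X : Type} (U V : X -> Prop) : Prop := forall x, U x -> V x.

Definition interior_operator {X : Type} (F : (X -> Prop) -> (X -> Prop)) : Prop :=
  (forall U V, subset U V -> subset (F U) (F V)) /\
  (forall U, subset (F U) U) /\
  (forall U, subset (F U) (F (F U))).

Definition Fix {X : Type} (F : (X -> Prop) -> (X -> Prop)) (U : X -> Prop) : Prop :=
  F U = U.

Definition is_basis_Fix {X I : Type} (F : (X -> Prop) -> (X -> Prop))
  (x : I -> (X -> Prop)) : Prop :=
  (forall i, Fix F (x i)) /\
  (forall y, Fix F y -> y = (fun a => exists i, subset (x i) y /\ x i a)).

Definition conv {A B : Type} (r : A -> B -> Prop) : B -> A -> Prop :=
  fun b a => r a b.

Definition diam {A B : Type} (t : A -> B -> Prop) (V : B -> Prop) : A -> Prop :=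
  fun a => exists b, t a b /\ V b.

Definition box {A B : Type} (t : A -> B -> Prop) (V : B -> Prop) : A -> Prop :=
  fun a => forall b, t a b -> V b.

(* Cardinal comparisons between types (a cardinal kappa is represented
   by a type K of cardinality kappa). *)
Definition card_le (A B : Type) : Prop :=
  exists f : A -> B, forall a1 a2, f a1 = f a2 -> a1 = a2.
Definition card_eq (A B : Type) : Prop :=
  exists f : A -> B, (forall a1 a2, f a1 = f a2 -> a1 = a2) /\
                     (forall b, exists a, f a = b).
Definition card_lt (A B : Type) : Prop := card_le A B /\ ~ card_le B A.

(* Main.v *)
Require Import Defs.
From Stdlib Require Import FunctionalExtensionality PropExtensionality.

Theorem lemma6 (X K : Type) (F : (X -> Prop) -> (X -> Prop)) :
  interior_operator F ->
  (forall (I : Type) (x : I -> (X -> Prop)), card_eq I K -> ~ is_basis_Fix F x) ->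
  ~ (exists (Y : Type) (r : X -> Y -> Prop),
       card_lt Y K /\ F = (fun U => diam r (box (conv r) U))).
Proof.
  intros _ Hnb [Y [r [[[g Hg] _] HF]]].
  apply (Hnb K (fun k a => exists y, g y = k /\ r a y)).
  { exists (fun k => k); split; eauto. }
  subst F. split.
  - intro k. unfold Fix. apply functional_extensionality; intro a.
    apply propositional_extensionality; split.
    + intros [y [Hy Hb]]. apply Hb. exact Hy.
    + intros [y [Hy Ha]]. exists y. split; [exact Ha|].
      intros a' Ha'. exists y. split; assumption.
  - intros y0 Hy0. apply functional_extensionality; intro a.
    apply propositional_extensionality; split.
    + intro Ha. rewrite <- Hy0 in Ha. destruct Ha as [y [Hay Hb]].
      exists (g y). split.
      * intros b [y' [Hy' Hb']]. apply Hg in Hy'. subst y'. apply Hb. exact Hb'.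
      * exists y. split; auto.
    + intros [k [Hs Hk]]. apply Hs. exact Hk.
Qed.
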